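(* Let $\Omega$ be the closure of a bounded domain in $\mathbb{R}^d$, let $X$ be a Banach space of functions on $\Omega$ with $C(\Omega)\subset X$ and $\|g\|_X\le C_X\|g\|_{C(\Omega)}$ for all $g\in C(\Omega)$, let $K$ be a compact subset of $C(\Omega)$, let ${\bf x}=(x_1,\dots,x_m)\in\Omega^m$ and $w\in\mathbb{R}^m$. Then $$\lim_{\varepsilon\to0^+}R(K(w,\varepsilon))_X=R(K_w)_X .$$
   Context: $\lambda_{\bf x}(g):=(g(x_1),\dots,g(x_m))$ for $g\in C(\Omega)$; on $\mathbb{R}^m$, $\|v\|:=\big[\frac1m\sum_{j=1}^m|v_j|^2\big]^{1/2}$. $K_{w'}:=\{h\in K:\lambda_{\bf x}(h)=w'\}$, $K(w,\varepsilon):=\bigcup_{w'\in\mathbb{R}^m,\ \|w'-w\|\le\varepsilon}K_{w'}$. For $S\subset X$, $R(S)_X:=\inf\{r:\ S\subset B(z,r)_X\text{ for some }z\in X\}$ (Chebyshev radius in $X$). *)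

(* Defs.v *)
From HB Require Import structures.
From mathcomp Require Import all_boot all_order all_algebra.
From mathcomp Require Import all_classical all_reals all_analysis.
Set Implicit Arguments. Unset Strict Implicit. Unset Printing Implicit Defensive.
Import Order.TTheory GRing.Theory Num.Theory.
Import numFieldNormedType.Exports.
Local Open Scope classical_set_scope.
Local Open Scope ring_scope.

Definition closure_of_bounded_domain (R : realType) (d : nat)
    (Om : set 'rV[R]_d) : Prop :=
  exists D : set 'rV[R]_d,
    [/\ open D, connected D, D !=set0, bounded_set D & Om = closure D].

(* C(Omega): functions continuous on Omega, represented canonically as
   functions on R^d vanishing outside Omega. *)
Definition CO (R : realType) (d : nat) (Om : set 'rV[R]_d) : set ('rV[R]_d -> R) :=
  [set f | {within Om, continuous f} /\ (forall x, ~ Om x -> f x = 0)].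

Definition supnorm (R : realType) (d : nat) (Om : set 'rV[R]_d)
    (g : 'rV[R]_d -> R) : R :=
  sup [set `|g x| | x in Om].

Definition lam (R : realType) (d m : nat) (xs : 'I_m -> 'rV[R]_d)
    (g : 'rV[R]_d -> R) : 'I_m -> R := fun j => g (xs j).

Definition mnorm (R : realType) (m : nat) (v : 'I_m -> R) : R :=
  Num.sqrt (m%:R^-1 * \sum_(j < m) `|v j| ^+ 2).

Definition Kfib (R : realType) (d m : nat) (K : set ('rV[R]_d -> R))
    (xs : 'I_m -> 'rV[R]_d) (w' : 'I_m -> R) : set ('rV[R]_d -> R) :=
  [set h | K h /\ lam xs h = w'].

Definition Knbhd (R : realType) (d m : nat) (K : set ('rV[R]_d -> R))
    (xs : 'I_m -> 'rV[R]_d) (w : 'I_m -> R) (eps : R) : set ('rV[R]_d -> R) :=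
  \bigcup_(w' in [set w' : 'I_m -> R | mnorm (w' \- w) <= eps]) Kfib K xs w'.

Definition cheb_radius (R : realType) (X : normedModType R) (S : set X) : \bar R :=
  ereal_inf [set r%:E | r in [set r : R | 0 <= r /\
     exists z : X, S `<=` [set y : X | `|y - z| <= r]]].

(* Main.v *)
Require Import Defs.
From HB Require Import structures.
From mathcomp Require Import all_boot all_order all_algebra.
From mathcomp Require Import all_classical all_reals all_analysis.
From mathcomp Require Import ring lra.
Import Order.TTheory GRing.Theory Num.Theory.
Import numFieldNormedType.Exports.
Local Open Scope classical_set_scope.
Local Open Scope ring_scope.
Set Implicit Arguments. Unset Strict Implicit.

Lemma small_le0 (R : realType) (x c : R) : 0 < c ->
  (forall e, 0 < e -> x <= c * e) -> x <= 0.
Proof.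
move=> c0 H; rewrite leNgt; apply/negP => x0.
have e0 : 0 < x / (2 * c) by apply: divr_gt0 => //; lra.
have := H _ e0.
have -> : c * (x / (2 * c)) = x / 2 by field; apply/eqP; lra.
lra.
Qed.

Lemma supnorm_le (R : realType) d (Om : set 'rV[R]_d) g e : 0 <= e ->
  (forall x, Om x -> `|g x| <= e) -> 0 <= supnorm Om g <= e.
Proof.
move=> e0 H; rewrite /supnorm.
case: (pselect (exists x, Om x)) => [[x0 Ox0]|nO].
  have ub : ubound [set `|g x| | x in Om] e by move=> _ [x Ox <-]; exact: H.
  apply/andP; split.
    apply: le_trans (normr_ge0 (g x0)) _.
    by apply: ub_le_sup; [exists e | exists x0].
  by apply: ge_sup => //; exists `|g x0|; exists x0.
have -> : [set `|g x| | x in Om] = set0.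
  by apply/seteqP; split => [y [x Ox _]|//]; exfalso; apply: nO; exists x.
by rewrite sup0 lexx.
Qed.

Lemma mnorm_coord (R : realType) m (v : 'I_m -> R) j :
  `|v j| <= Num.sqrt m%:R * mnorm v.
Proof.
rewrite /mnorm -sqrtrM ?ler0n //.
have m0 : (0 < m)%N by exact: (leq_ltn_trans (leq0n _) (ltn_ord j)).
rewrite mulrA divff ?pnatr_eq0 -?lt0n // mul1r.
rewrite -[leLHS]sqrtr_sqr ler_wsqrtr // (bigD1 j) //= real_normK ?num_real //.
rewrite lerDl; apply: sumr_ge0 => i _; exact: sqr_ge0.
Qed.

Section Cheb.
Variables (R : realType) (X : normedModType R).
Local Open Scope ereal_scope.

Lemma cheb_mono (S T : set X) : S `<=` T -> cheb_radius S <= cheb_radius T.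
Proof.
move=> ST; apply: ereal_inf_le_tmp => _ [r [r0 [z Tz]] <-].
by exists r => //; split => //; exists z; apply: subset_trans Tz.
Qed.

Lemma cheb_le (S : set X) z (r : R) : (0 <= r)%R ->
  (forall y, S y -> (`|y - z| <= r)%R) -> cheb_radius S <= r%:E.
Proof.
move=> r0 H; apply: ereal_inf_lbound; exists r => //; split => //.
by exists z => y /H.
Qed.

Lemma cheb_ge0 (S : set X) : 0 <= cheb_radius S.
Proof.
by apply: le_ereal_inf_tmp => _ [r [r0 _] <-]; rewrite lee_fin.
Qed.

Lemma cheb_lt (S : set X) x : cheb_radius S < x ->
  exists r z, [/\ (0 <= r)%R, r%:E < x & forall y, S y -> (`|y - z| <= r)%R].
Proof.
by move=> /ereal_inf_lt [_ [r [r0 [z Sz]] <-] rx]; exists r, z; split => // y /Sz.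
Qed.
End Cheb.

Lemma Knbhd_mono (R : realType) d m (K : set ('rV[R]_d -> R)) xs (w : 'I_m -> R) e1 e2 :
  e1 <= e2 -> Knbhd K xs w e1 `<=` Knbhd K xs w e2.
Proof. by move=> e12 h [w' /= Hw' Hk]; exists w' => //=; apply: le_trans e12. Qed.
Arguments Knbhd_mono {R d m K xs w e1 e2}.

Lemma Kfib_Knbhd (R : realType) d m (K : set ('rV[R]_d -> R)) xs (w : 'I_m -> R) e :
  0 <= e -> Kfib K xs w `<=` Knbhd K xs w e.
Proof.
move=> e0 h Hh; exists w => //=.
have -> : w \- w = 0 by apply/funext => j /=; rewrite subrr.
rewrite /mnorm big1 ?mulr0 ?sqrtr0 // => j _.
by rewrite /= normr0 expr0n.
Qed.

Lemma CO_lin (R : realType) d (Om : set 'rV[R]_d) (a : R) f g :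
  CO Om f -> CO Om g -> CO Om (a *: f + g).
Proof.
move=> [cf f0] [cg g0]; split; last first.
  by move=> x nx; change (a * f x + g x = 0); rewrite f0 // g0 // mulr0 addr0.
move=> x; apply: cvgD; last exact: cg.
by apply: cvgZr; exact: cf.
Qed.

Lemma keyB (R : realType) (d : nat) (Om : set 'rV[R]_d)
  (X : normedModType R) (iota : ('rV[R]_d -> R) -> X) (CX : R)
  (K : set ('rV[R]_d -> R)) (m : nat) (xs : 'I_m -> 'rV[R]_d) (w : 'I_m -> R)
  (z : X) (r del : R) :
  (forall (a : R) f g, CO Om f -> CO Om g -> iota (a *: f + g) = a *: iota f + iota g) ->
  (forall g, CO Om g -> `|iota g| <= CX * supnorm Om g) ->
  K `<=` CO Om ->
  compact (K : set {uniform` Om -> R}) ->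
  (forall j, Om (xs j)) ->
  (forall h, Kfib K xs w h -> `|iota h - z| <= r) -> 0 < del ->
  exists2 e0, 0 < e0 & forall h, Knbhd K xs w e0 h -> `|iota h - z| <= r + del.
Proof.
move=> lin bnd KC cK Oxs Hfib del0.
case: (pselect (exists2 e0, 0 < e0 &
  forall h, Knbhd K xs w e0 h -> `|iota h - z| <= r + del)) => // Hn.
exfalso.
have Hall : forall e, 0 < e -> exists h, Knbhd K xs w e h /\ ~ (`|iota h - z| <= r + del).
  move=> e e0; apply: contrapT => Hne; apply: Hn; exists e => // h Hh.
  by apply: contrapT => nh; apply: Hne; exists h.
pose B e : set {uniform` Om -> R} :=
  Knbhd K xs w e `&` [set h | ~ (`|iota h - z| <= r + del)].
pose F := filter_from [set e : R | 0 < e] B.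
have FF : Filter F.
  apply: filter_from_filter; first by exists 1; exact: ltr01.
  move=> i j i0 j0; exists (Order.min i j); first by rewrite /= lt_min i0.
  move=> h [Hk Hn']; split; (split; [|exact: Hn']); apply: (Knbhd_mono _ h Hk).
    by rewrite ge_min lexx.
  by rewrite ge_min lexx orbT.
have PF : ProperFilter F.
  apply: filter_from_proper => e /Hall [h [Hh1 Hh2]]; by exists h.
have FK : F K by exists 1; [exact: ltr01|] => h [[w' _ [Kh _]] _].
have [h [Kh clh]] := cK F PF FK.
have key : forall e, 0 < e -> (forall j, `|h (xs j) - w j| <= (1 + Num.sqrt m%:R) * e)
   /\ r + del - `|CX| * e < `|iota h - z|.
  move=> e e0.
  have nU : nbhs (h : {uniform` Om -> R})
     [set g : {uniform` Om -> R} | forall y, Om y -> ball (h y) e (g y)].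
    apply/uniform_nbhs; exists [set xy | ball xy.1 e xy.2]; split => //.
    exact: (entourage_ball _ (PosNum e0)).
  have [g [[[w' /= Hw' [Kg Hg]] Hgn] Ug]] := clh _ _ (ex_intro2 _ _ e e0 (@subset_refl _ _)) nU.
  subst w'.
  split.
    move=> j; have := Ug _ (Oxs j); rewrite /ball /= => Hb.
    have H2 : `|g (xs j) - w j| <= Num.sqrt m%:R * e.
      apply: le_trans (mnorm_coord (lam xs g \- w) j) _.
      by apply: ler_wpM2l => //; exact: sqrtr_ge0.
    have := ler_distD (g (xs j)) (h (xs j)) (w j).
    rewrite mulrDl mul1r; lra.
  have Cg := KC _ Kg; have Ch := KC _ Kh.
  have E : iota g - iota h = iota ((-1) *: h + g) by rewrite lin // scaleN1r addrC.
  have /andP[s0 se] : 0 <= supnorm Om ((-1) *: h + g) <= e.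
    apply: supnorm_le; first exact: ltW.
    move=> y Oy; have := Ug _ Oy; rewrite /ball /= => Hb.
    change (`|-1 * h y + g y| <= e); rewrite mulN1r addrC distrC; exact: ltW.
  have B1 := bnd _ (CO_lin (-1) Ch Cg).
  rewrite -E in B1.
  have B2 : CX * supnorm Om ((-1) *: h + g) <= `|CX| * e.
    apply: le_trans (_ : `|CX| * supnorm Om ((-1) *: h + g) <= _).
      by apply: ler_wpM2r => //; rewrite real_ler_norm ?num_real.
    by apply: ler_wpM2l.
  have := ler_distD (iota h) (iota g) z.
  move/negP: Hgn; rewrite -ltNge => Hgn.
  lra.
have lamh : lam xs h = w.
  apply/funext => j; apply/eqP; rewrite -subr_eq0 -normr_le0.
  apply: (@small_le0 _ _ (1 + Num.sqrt m%:R)).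
    by have := sqrtr_ge0 (m%:R : R); lra.
  by move=> e e0; exact: (key e e0).1 j.
have Hr := Hfib h (conj Kh lamh).
have : del <= 0.
  apply: (@small_le0 _ _ (`|CX| + 1)); first by have := normr_ge0 CX; lra.
  move=> e e0; have [_ H] := key e e0.
  rewrite mulrDl mul1r; lra.
lra.
Qed.

Unset Implicit Arguments.

Theorem lemma4p3 (R : realType) (d : nat) (Om : set 'rV[R]_d)
  (X : completeNormedModType R) (iota : ('rV[R]_d -> R) -> X) (CX : R)
  (K : set ('rV[R]_d -> R)) (m : nat) (xs : 'I_m -> 'rV[R]_d) (w : 'I_m -> R) :
  closure_of_bounded_domain Om ->
  (* C(Omega) is a linear subspace of X via the embedding iota *)
  (forall (a : R) f g, CO Om f -> CO Om g -> iota (a *: f + g) = a *: iota f + iota g) ->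
  {in CO Om &, injective iota} ->
  (forall g, CO Om g -> `|iota g| <= CX * supnorm Om g) ->
  K `<=` CO Om ->
  compact (K : set {uniform` Om -> R}) ->
  (0 < m)%N ->
  (forall j, Om (xs j)) ->
  (fun eps => cheb_radius (iota @` Knbhd K xs w eps)) @ 0^'+
    --> cheb_radius (iota @` Kfib K xs w).
Proof.
move=> _ lin _ bnd KC cK _ Oxs.
set CR := fun eps => cheb_radius (iota @` Knbhd K xs w eps).
have mono : forall e1 e2, 0 <= e1 <= e2 -> (CR e1 <= CR e2)%E.
  move=> e1 e2 /andP[_ e12]; apply: cheb_mono; apply: image_subset.
  exact: Knbhd_mono.
have mono0 : forall e, 0 <= e -> (cheb_radius (iota @` Kfib K xs w) <= CR e)%E.
  move=> e e0; apply: cheb_mono; apply: image_subset; exact: Kfib_Knbhd.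
have C0ge := cheb_ge0 (iota @` Kfib K xs w).
case E: (cheb_radius (iota @` Kfib K xs w)) => [r0| |]; last by rewrite E in C0ge.
  have bounds : forall del, 0 < del -> \forall e \near 0^'+,
      (r0%:E <= CR e)%E /\ (CR e <= (r0 + del)%:E)%E.
    move=> del del0.
    have : (cheb_radius (iota @` Kfib K xs w) < (r0 + del / 2)%:E)%E.
      by rewrite E lte_fin; lra.
    move=> /cheb_lt [r [z [r0' rlt Hz]]].
    have del2 : 0 < del / 2 by lra.
    have [e0 e0pos He0] := keyB (z := z) lin bnd KC cK Oxs
      (fun h Hh => Hz _ (ex_intro2 _ _ h Hh erefl)) del2.
    near=> e.
    have epos : 0 < e by near: e; exact: nbhs_right_gt.
    have ee0 : e <= e0 by near: e; exact: nbhs_right_le.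
    split; first by rewrite -E; apply: mono0; exact: ltW.
    have h1 : (CR e <= CR e0)%E by apply: mono; rewrite (ltW epos) ee0.
    have h2 : (CR e0 <= (r + del / 2)%:E)%E.
      apply: (cheb_le (z := z)); first lra.
      by move=> _ [h Hh <-]; exact: He0.
    have h3 : ((r + del / 2)%:E <= (r0 + del)%:E)%E.
      by rewrite lee_fin; move: rlt; rewrite lte_fin; lra.
    exact: le_trans h1 (le_trans h2 h3).
  Unshelve. all: try by end_near.
  apply/fine_cvgP; split.
    apply: filterS (bounds 1 ltr01) => e [H1 H2].
    by move: H1 H2; case: (CR e).
  apply/(@cvgrPdist_le _ R^o) => eps eps0.
  apply: filterS (bounds eps eps0) => e [H1 H2].
  move: H1 H2 => /=; case: (CR e) => //.
  move=> c; rewrite !lee_fin /= => H1 H2; rewrite ler_norml; lra.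
have HE : {near 0^'+, (fun=> +oo%E) =1 CR}.
  near=> e.
  have epos : 0 < e by near: e; exact: nbhs_right_gt.
  by have := mono0 e (ltW epos); rewrite E leye_eq => /eqP ->.
apply: cvg_trans (near_eq_cvg HE) _; exact: cvg_cst.
Unshelve. all: by end_near.
Qed.
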